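(* In the setting described in the context, fix $t\in\mathbb{Z}_+$ and $\delta\in(0,1)$, let $\widehat k$ be any element of $\mathop{\mathrm{argmin}}_{k\in[t]}\{\widehat\phi(t,k,\delta)+\widehat\psi(t,k,\delta)\}$, and suppose that (on some realization of the data) $|\widehat{\mu}_{t,k}-\mu_t|\le\phi(t,k)+\widehat\psi(t,k,\delta)$ holds for every $k\in[t]$. Then $$|\widehat\mu_{t,\widehat k}-\mu_t|\le 3\min_{k\in[t]}\big\{\phi(t,k)+\widehat\psi(t,k,\delta)\big\}.$$
   Context: Let $a<b$ be real numbers, $M=b-a$, and $t\in\mathbb{Z}_+$. For each $j\in[t]$ let $\mathcal{Q}_j$ be a probability distribution on $[a,b]$ with mean $\mu_j$, and let $B_j\ge 1$ be an integer; the data are $u_{j,i}\in[a,b]$, $j\in[t]$, $i\in[B_j]$ (with $u_{j,i}\sim\mathcal{Q}_j$ independent). For $k\in[t]$ define $B_{t,k}=\sum_{j=t-k+1}^t B_j$, $\widehat{\mu}_{t,k}=\frac{1}{B_{t,k}}\sum_{j=t-k+1}^t\sum_{i=1}^{B_j}u_{j,i}$, $\phi(t,k)=\max_{t-k+1\le j\le t}|\mu_j-\mu_t|$, when $B_{t,k}\ge2$, $\widehat v_{t,k}^2=\frac{1}{B_{t,k}-1}\sum_{j=t-k+1}^t\sum_{i=1}^{B_j}(u_{j,i}-\widehat\mu_{t,k})^2$ with $\widehat v_{t,k}\ge0$, and for $\delta\in(0,1)$ $$\widehat\psi(t,k,\delta)=\begin{cases} M, & B_{t,k}=1,\\ \widehat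 v_{t,k}\sqrt{\frac{2\log(2/\delta)}{B_{t,k}}}+\frac{8M\log(2/\delta)}{3(B_{t,k}-1)}, & B_{t,k}\ge 2,\end{cases}\qquad \widehat\phi(t,k,\delta)=\max_{i\in[k]}\Big(|\widehat\mu_{t,k}-\widehat\mu_{t,i}|-\big[\widehat\psi(t,k,\delta)+\widehat\psi(t,i,\delta)\big]\Big)_+,$$ where $x_+=\max\{x,0\}$. *)

(* Defs.v *)
From HB Require Import structures.
From mathcomp Require Import all_boot all_order all_algebra.
From mathcomp Require Import all_classical all_reals all_analysis.
Set Implicit Arguments. Unset Strict Implicit. Unset Printing Implicit Defensive.
Import Order.TTheory GRing.Theory Num.Theory.
Local Open Scope ring_scope.

(* Indices are 1-based: blocks j in [t-k+1, t], samples i in [1, B j].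
   Data u j i, batch sizes B j, means mu j. *)
Section Defs.
Variable R : realType.

Definition Btk (B : nat -> nat) (t k : nat) : nat :=
  (\sum_(t - k + 1 <= j < t.+1) B j)%N.

Definition muhat (u : nat -> nat -> R) (B : nat -> nat) (t k : nat) : R :=
  (\sum_(t - k + 1 <= j < t.+1) \sum_(1 <= i < (B j).+1) u j i) / (Btk B t k)%:R.

Definition vhat (u : nat -> nat -> R) (B : nat -> nat) (t k : nat) : R :=
  Num.sqrt ((\sum_(t - k + 1 <= j < t.+1) \sum_(1 <= i < (B j).+1)
               (u j i - muhat u B t k) ^+ 2) / (Btk B t k - 1)%:R).

(* \hat psi(t,k,delta) with M = b - a *)
Definition psihat (M : R) (u : nat -> nat -> R) (B : nat -> nat)
    (t k : nat) (delta : R) : R :=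
  if Btk B t k == 1%N then M
  else vhat u B t k * Num.sqrt (2 * ln (2 / delta) / (Btk B t k)%:R)
       + 8 * M * ln (2 / delta) / (3 * (Btk B t k - 1)%:R).

(* phi(t,k) = max_{t-k+1 <= j <= t} |mu_j - mu_t| (all terms are >= 0) *)
Definition phi (mu : nat -> R) (t k : nat) : R :=
  \big[Num.max/0]_(t - k + 1 <= j < t.+1) `|mu j - mu t|.

Definition phihat (M : R) (u : nat -> nat -> R) (B : nat -> nat)
    (t k : nat) (delta : R) : R :=
  \big[Num.max/0]_(1 <= i < k.+1)
     Num.max (`|muhat u B t k - muhat u B t i|
              - (psihat M u B t k delta + psihat M u B t i delta)) 0.

(* min_{k in [t]} f k, for t >= 1 (the k = 1 term seeds the fold) *)
Definition min_over (t : nat) (f : nat -> R) : R :=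
  \big[Num.min/f 1%N]_(1 <= k < t.+1) f k.

End Defs.

(* Main.v *)
Require Import Defs.
From HB Require Import structures.
From mathcomp Require Import all_boot all_order all_algebra.
From mathcomp Require Import all_classical all_reals all_analysis.
From mathcomp Require Import lra zify.
Import Order.TTheory GRing.Theory Num.Theory.
Local Open Scope ring_scope.

Section Helpers.
Variable R : realType.

Lemma bmax_ge0 (r : seq nat) (F : nat -> R) : 0 <= \big[Num.max/0]_(j <- r) F j.
Proof. elim: r => [|x r IH]; rewrite ?big_nil ?big_cons //; by rewrite le_max IH orbT. Qed.

Lemma bmax_mem (r : seq nat) (F : nat -> R) x :
  x \in r -> F x <= \big[Num.max/0]_(j <- r) F j.
Proof.
elim: r => [|y r IH] //; rewrite inE big_cons le_max => /orP [/eqP->|H].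
  by rewrite lexx.
by rewrite IH ?orbT.
Qed.

Lemma bmax_le (r : seq nat) (F : nat -> R) c :
  0 <= c -> (forall x, x \in r -> F x <= c) -> \big[Num.max/0]_(j <- r) F j <= c.
Proof.
move=> c0; elim: r => [|y r IH] H; rewrite ?big_nil ?big_cons // ge_max.
by rewrite H ?inE ?eqxx // IH // => x xr; apply: H; rewrite inE xr orbT.
Qed.

Lemma bmin_ge (r : seq nat) (F : nat -> R) x0 c :
  c <= x0 -> (forall x, x \in r -> c <= F x) -> c <= \big[Num.min/x0]_(j <- r) F j.
Proof.
move=> c0; elim: r => [|y r IH] H; rewrite ?big_nil ?big_cons // le_min.
by rewrite H ?inE ?eqxx // IH // => x xr; apply: H; rewrite inE xr orbT.
Qed.

Lemma phi_ge0 (mu : nat -> R) t k : 0 <= phi mu t k.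
Proof. exact: bmax_ge0. Qed.

Lemma phi_mono (mu : nat -> R) t i k : (i <= k)%N -> phi mu t i <= phi mu t k.
Proof.
move=> ik; apply: bmax_le; first exact: phi_ge0.
move=> j; rewrite mem_index_iota => /andP [h1 h2]; apply: bmax_mem.
rewrite mem_index_iota; apply/andP; split; lia.
Qed.

Lemma phihat_ge0 M u B t k (delta : R) : 0 <= phihat M u B t k delta.
Proof. exact: bmax_ge0. Qed.

Lemma phihat_term M u B t k i (delta : R) : (1 <= i <= k)%N ->
  `|muhat u B t k - muhat u B t i| - (psihat M u B t k delta + psihat M u B t i delta)
  <= phihat M u B t k delta.
Proof.
move=> ik.
have iI : i \in index_iota 1 k.+1 by rewrite mem_index_iota; lia.
have H := @bmax_mem (index_iota 1 k.+1) (fun i => Num.max (`|muhat u B t k - muhat u B t i|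
  - (psihat M u B t k delta + psihat M u B t i delta)) 0) i iI.
apply: le_trans H; by rewrite le_max lexx.
Qed.

Lemma psihat_ge0 M u B t k (delta : R) : 0 < M -> 0 < delta < 1 ->
  0 <= psihat M u B t k delta.
Proof.
move=> M0 /andP [d0 d1]; rewrite /psihat; case: ifP => _; first exact: ltW.
have l0 : 0 <= ln (2 / delta).
  apply: ln_ge0; rewrite ler_pdivlMr //; lra.
apply: addr_ge0.
  apply: mulr_ge0; exact: sqrtr_ge0.
apply: divr_ge0; last by rewrite mulr_ge0 ?ler0n.
by rewrite mulr_ge0 // mulr_ge0 // ltW.
Qed.

End Helpers.
Arguments psihat_ge0 {R}.
Arguments bmax_ge0 {R}. Arguments bmax_mem {R}. Arguments bmax_le {R}. Arguments bmin_ge {R}.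
Arguments phi_ge0 {R}. Arguments phi_mono {R}. Arguments phihat_ge0 {R}. Arguments phihat_term {R}.

Require Import Defs.
From HB Require Import structures.
From mathcomp Require Import all_boot all_order all_algebra.
From mathcomp Require Import all_classical all_reals all_analysis.
Import Order.TTheory GRing.Theory Num.Theory.
Local Open Scope ring_scope.

Theorem mainTheorem5 (R : realType) (a b : R) (t : nat) (delta : R)
    (B : nat -> nat) (u : nat -> nat -> R) (mu : nat -> R) (khat : nat) :
  a < b ->
  (0 < t)%N ->
  0 < delta < 1 ->
  (forall j, (1 <= j <= t)%N -> (1 <= B j)%N) ->
  (forall j, (1 <= j <= t)%N -> a <= mu j <= b) ->
  (forall j i, (1 <= j <= t)%N -> (1 <= i <= B j)%N -> a <= u j i <= b) ->
  (* khat is an argmin over k in [t] of phihat + psihat *)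
  (1 <= khat <= t)%N ->
  (forall k, (1 <= k <= t)%N ->
     phihat (b - a) u B t khat delta + psihat (b - a) u B t khat delta
     <= phihat (b - a) u B t k delta + psihat (b - a) u B t k delta) ->
  (* the good event, on this realization *)
  (forall k, (1 <= k <= t)%N ->
     `|muhat u B t k - mu t| <= phi mu t k + psihat (b - a) u B t k delta) ->
  `|muhat u B t khat - mu t|
    <= 3 * min_over t (fun k => phi mu t k + psihat (b - a) u B t k delta).
Proof.
move=> ab t0 dl _ _ _ /andP [kh1 kh2] argm good.
set f := fun k => phi mu t k + psihat (b - a) u B t k delta.
have phb : forall k, (1 <= k <= t)%N -> phihat (b - a) u B t k delta <= 2 * phi mu t k.
  move=> k /andP [k1 k2]; apply: bmax_le; first by have := phi_ge0 mu t k; lra.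
  move=> i; rewrite mem_index_iota => /andP [i1 i2].
  rewrite ge_max; apply/andP; split; last by have := phi_ge0 mu t k; lra.
  have g1 := good k (introT andP (conj k1 k2)).
  have g2 : `|muhat u B t i - mu t| <= phi mu t i + psihat (b - a) u B t i delta.
    by apply: good; lia.
  have pm := @phi_mono R mu t i k (ltnSE i2).
  have := ler_distD (mu t) (muhat u B t k) (muhat u B t i).
  rewrite (distrC (mu t)). lra.
have key : forall k, (1 <= k <= t)%N -> `|muhat u B t khat - mu t| <= 3 * f k.
  move=> k /andP [k1 k2]; rewrite /f.
  have ak := argm k (introT andP (conj k1 k2)).
  have pk := phb k (introT andP (conj k1 k2)).
  have gk := good k (introT andP (conj k1 k2)).
  have gh := good khat (introT andP (conj kh1 kh2)).
  have h0 := phihat_ge0 (b - a) u B t khat delta.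
  have p0 := psihat_ge0 (b - a) u B t k delta (ltac:(lra)) dl.
  clear argm good phb.
  case: (leqP khat k) => hk.
    have := @phi_mono R mu t khat k hk; lra.
  have ht := phihat_term (b - a) u B t khat k delta (introT andP (conj k1 (ltnW hk))).
  have := ler_distD (muhat u B t k) (muhat u B t khat) (mu t); lra.
have : `|muhat u B t khat - mu t| / 3 <= min_over t f.
  apply: bmin_ge; first by have := key 1%N; rewrite /f; move/(_ (introT andP (conj (leqnn 1) t0))); lra.
  move=> x; rewrite mem_index_iota => /andP [x1 x2].
  have := key x (introT andP (conj x1 (ltnSE x2))); lra.
lra.
Qed.
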